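(* Let $n$ be a square-free integer with $n\neq 1$ and let $\lambda\geq 3$ be an integer. For integers $s$ with $(s-1)^2>n$ put $\alpha_s=(s^2-s-n,\ (s-1)^2-n,\ s^2-n)\in A(n)$. Then there is $s_0$ such that for all integers $s>t\geq s_0$, the elements $\alpha_s$ and $\alpha_t$ lie in different $H(\lambda)$-orbits of $A(n)$; in fact every element $(a',b',c')$ of the $H(\lambda)$-orbit of $\alpha_s$ satisfies $|a'|\geq s^2-s-n$.
   Context: $A(n)=\{(a,b,c)\in\mathbb{Z}^3: bc=a^2-n\}$, in bijection with $\mathbb{Q}^*(\sqrt n)=\{\frac{a+\sqrt n}{c}: a,c\in\mathbb Z, c\neq 0, \frac{a^2-n}{c}\in\mathbb Z\}$ via $\frac{a+\sqrt n}{c}\mapsto (a,\frac{a^2-n}{c},c)$. $H(\lambda)$ is the group generated by $x:z\mapsto -1/z$ and $w_\lambda:z\mapsto z+\lambda$, acting on triples by $x(a,b,c)=(-a,c,b)$ and $w_\lambda(a,b,c)=(a+\lambda c,\,2\lambda a+b+\lambda^2c,\,c)$. *)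

(* Defs.v *)
From mathcomp Require Import all_boot all_order all_algebra.
Set Implicit Arguments. Unset Strict Implicit. Unset Printing Implicit Defensive.
Import Order.TTheory GRing.Theory Num.Theory.
Local Open Scope ring_scope.

Definition triple := (int * int * int)%type.

Definition inA (n : int) (t : triple) : Prop :=
  let: (a, b, c) := t in b * c = a ^+ 2 - n.

Definition squarefree (n : int) : Prop :=
  forall d : int, (d ^+ 2 %| n)%Z -> `|d| = 1.

(* action of the generators x : z |-> -1/z and w_lambda : z |-> z + lambda *)
Definition act_x (t : triple) : triple :=
  let: (a, b, c) := t in (- a, c, b).

Definition act_w (lam : int) (t : triple) : triple :=
  let: (a, b, c) := t in (a + lam * c, 2 * lam * a + b + lam ^+ 2 * c, c).

(* H(lambda)-orbit: closure under x, w_lambda and w_lambda^{-1} = w_{-lambda}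
   (x is an involution, so this is the orbit under the generated group). *)
Inductive Horbit (lam : int) (t : triple) : triple -> Prop :=
  | orb_refl : Horbit lam t t
  | orb_x u : Horbit lam t u -> Horbit lam t (act_x u)
  | orb_w u : Horbit lam t u -> Horbit lam t (act_w lam u)
  | orb_winv u : Horbit lam t u -> Horbit lam t (act_w (- lam) u).

Definition alpha (n s : int) : triple :=
  (s ^+ 2 - s - n, (s - 1) ^+ 2 - n, s ^+ 2 - n).

(* Main.v *)
Require Import Defs.
From mathcomp Require Import all_boot all_order all_algebra.
From mathcomp Require Import ring lra zify.
Import Order.TTheory GRing.Theory Num.Theory.
Local Open Scope ring_scope.
Set Implicit Arguments. Unset Strict Implicit.

Lemma sb0 (s n m : int) : 0 <= m -> - m <= n -> n <= m -> m + 5 <= s ->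
  3 * s <= s * s - s - n /\ m + 20 <= s * s - s - n.
Proof. move=> h0 h1 h2 h.
have h3 : (m + 5) * s <= s * s by nia.
have h4 : 5 * m <= m * s by nia.
lia.
Qed.
Lemma sb (s n : int) : `|n| + 5 <= s ->
  [/\ 3 * s <= s ^+ 2 - s - n, `|n| + 20 <= s ^+ 2 - s - n,
      n < (s - 1) ^+ 2, (s - 1) ^+ 2 - n = (s ^+ 2 - s - n) - s + 1 &
      s ^+ 2 - n = (s ^+ 2 - s - n) + s].
Proof. move=> h.
have e1 : (s - 1) ^+ 2 = s ^+ 2 - 2 * s + 1 by ring.
have e2 : s ^+ 2 = s * s by ring.
have [g1 g2] := @sb0 s n `|n| ltac:(lia) ltac:(lia) ltac:(lia) h.
rewrite e1 e2.
split; [lia | lia | lia | ring | ring].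
Qed.
Lemma L9 (m a : int) : m + 20 <= a -> 0 <= m -> 9 * m <= 5 * a ^+ 2.
Proof. move=> h h'. nia. Qed.
Lemma L5 (s t : int) : 1 <= t -> t < s -> t ^+ 2 - t < s ^+ 2 - s.
Proof. move=> h h'. nia. Qed.
Lemma L2 (k l c : int) : 1 <= k -> 3 <= l -> 0 <= c -> 3 * c <= k * l * c.
Proof. move=> h1 h2 h3. have h : 3 <= k * l by nia. nia. Qed.
Lemma L3 (a0 A : int) : 1 <= a0 -> a0 <= A -> a0 ^+ 2 <= A ^+ 2.
Proof. nia. Qed.
Lemma L4 (A B C n a0 : int) : 0 < C -> 3 * C <= 2 * A -> A ^+ 2 - n <= B * C ->
  9 * n <= 5 * a0 ^+ 2 -> a0 ^+ 2 <= A ^+ 2 -> 2 * A <= 3 * B.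
Proof. move=> hC h1 h2 h3 h4.
have h5 : 2 * A * C <= 3 * B * C by nia.
nia. Qed.

Lemma tri (x y : int) : `|x - y| <= `|x| + `|y|.
Proof. lia. Qed.

Lemma tri2 (x y : int) : x - `|y| <= `|x - y|.
Proof. lia. Qed.

Definition wk (lam k : int) (t : triple) : triple :=
  let: (a, b, c) := t in
  (a + k * lam * c, 2 * k * lam * a + b + (k * lam) ^+ 2 * c, c).

Lemma wk0 lam t : wk lam 0 t = t.
Proof. case: t => [[a b] c] /=; congr (_, _, _); ring. Qed.

Lemma wkw lam k t : act_w lam (wk lam k t) = wk lam (k + 1) t.
Proof. case: t => [[a b] c] /=; congr (_, _, _); ring. Qed.

Lemma wkwinv lam k t : act_w (- lam) (wk lam k t) = wk lam (k - 1) t.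
Proof. case: t => [[a b] c] /=; congr (_, _, _); ring. Qed.

Lemma xx t : act_x (act_x t) = t.
Proof. case: t => [[a b] c] /=; congr (_, _, _); ring. Qed.

Inductive Red (lam : int) (p0 : triple) : triple -> nat -> Prop :=
  | RS : Red lam p0 p0 0
  | RX p tg : Red lam p0 p tg -> tg <> 1%N -> Red lam p0 (act_x p) 1
  | RW p tg k : Red lam p0 p tg -> tg <> 2%N -> k != 0 -> Red lam p0 (wk lam k p) 2.

Lemma red_w lam p0 u tg j : Red lam p0 u tg -> (j == 1) || (j == -1) ->
  exists tg', Red lam p0 (wk lam j u) tg'.
Proof.
move=> H hj; case: H.
- exists 2%N; apply: (@RW _ _ _ 0%N) => //; [exact: RS | lia].
- move=> p tg0 Hp htg; exists 2%N; apply: (@RW _ _ _ 1%N) => //; [exact: RX Hp htg|lia].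
- move=> p tg0 k Hp htg hk.
  have -> : wk lam j (wk lam k p) = wk lam (k + j) p.
    case: (p) => [[a b] c] /=; congr (_, _, _); ring.
  case: (eqVneq (k + j) 0) => e.
  + rewrite e wk0; by exists tg0.
  + by exists 2%N; apply: (@RW _ _ _ tg0).
Qed.

Lemma horbit_red lam p0 q : Horbit lam p0 q -> exists tg, Red lam p0 q tg.
Proof.
elim=> [|u _ [tg H]|u _ [tg H]|u _ [tg H]].
- by exists 0%N; exact: RS.
- case: H.
  + by exists 1%N; apply: (@RX _ _ _ 0%N) => //; exact: RS.
  + move=> p tg0 Hp _; rewrite xx; by exists tg0.
  + move=> p tg0 k Hp htg hk; exists 1%N; apply: (@RX _ _ _ 2%N) => //.
    exact: RW Hp htg hk.
- have -> : act_w lam u = wk lam 1 u.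
    case: (u) => [[a b] c] /=; congr (_, _, _); ring.
  by apply: red_w H _.
- have -> : act_w (- lam) u = wk lam (-1) u.
    case: (u) => [[a b] c] /=; congr (_, _, _); ring.
  by apply: red_w H _.
Qed.

Definition Wr (a0 : int) (t : triple) : Prop :=
  let: (a, b, c) := t in 2 * `|a| <= 3 * `|c| /\ a0 + `|a| <= 3 * `|c|.
Definition Xr (a0 : int) (t : triple) : Prop :=
  let: (a, b, c) := t in 2 * `|a| <= 3 * `|b| /\ a0 + `|a| <= 3 * `|b|.

Definition Inv (n a0 : int) (t : triple) (tg : nat) : Prop :=
  inA n t /\ a0 <= `|t.1.1| /\ (tg <> 2%N -> Wr a0 t) /\ (tg <> 1%N -> Xr a0 t).

Lemma step_w (n lam a0 a b c k : int) : 3 <= lam -> k != 0 -> 1 <= a0 ->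
  9 * `|n| <= 5 * a0 ^+ 2 ->
  b * c = a ^+ 2 - n -> 2 * `|a| <= 3 * `|c| -> a0 + `|a| <= 3 * `|c| ->
  let a' := a + k * lam * c in
  let b' := 2 * k * lam * a + b + (k * lam) ^+ 2 * c in
  a0 <= `|a'| /\ 2 * `|a'| <= 3 * `|b'| /\ a0 + `|a'| <= 3 * `|b'|.
Proof.
move=> hl hk ha0 hn hbc h1 h2 a' b'.
have hbc' : b' * c = a' ^+ 2 - n.
  have -> : n = a ^+ 2 - b * c by rewrite hbc; ring.
  rewrite /a' /b'; ring.
have hC : 0 < `|c| by have := normr_ge0 a; lra.
have hk1 : 1 <= `|k| by move: hk; lia.
have h3 : 3 * `|c| <= `|k * lam * c|.
  rewrite !normrM (ger0_norm (x:=lam)); last lia.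
  by apply: L2 => //; lia.
have h4 : `|k * lam * c| <= `|a'| + `|a|.
  have -> : k * lam * c = a' - a by rewrite /a'; ring.
  exact: tri.
have hA : a0 <= `|a'| by lra.
have hA2 : 3 * `|c| <= 2 * `|a'| by lra.
have hBC : `|b'| * `|c| = `|a' ^+ 2 - n| by rewrite -normrM hbc'.
have hsq : `|a'| ^+ 2 = a' ^+ 2 by rewrite real_normK ?num_real.
have hBC2 : `|a'| ^+ 2 - `|n| <= `|b'| * `|c| by rewrite hBC hsq; exact: tri2.
have hAA : a0 ^+ 2 <= `|a'| ^+ 2 by apply: L3.
have h5 : 2 * `|a'| <= 3 * `|b'| by exact: (@L4 `|a'| `|b'| `|c| `|n| a0 hC hA2 hBC2 hn hAA).
split => //; split => //; lra.
Qed.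

Lemma red_inv n lam a0 p0 p tg : 3 <= lam -> 1 <= a0 -> 9 * `|n| <= 5 * a0 ^+ 2 ->
  Inv n a0 p0 0 -> Red lam p0 p tg -> Inv n a0 p tg.
Proof.
move=> hl ha0 hn I0; elim => //.
- move=> [[a b] c] tg0 _ [hA [ha [hW hX]]] htg.
  have {hW} [x1 x2] := hX htg.
  rewrite /Inv /inA /= in hA *; rewrite normrN; split; first by rewrite sqrrN mulrC.
  by split => //; split => // _; split => //; rewrite normrN.
- move=> [[a b] c] tg0 k _ [hA [ha [hW hX]]] htg hk.
  have {hX} [x1 x2] := hW htg.
  rewrite /Inv /inA /= in hA *.
  have [y1 [y2 y3]] := step_w hl hk ha0 hn hA x1 x2.
  split.
    have -> : n = a ^+ 2 - b * c by rewrite hA; ring.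
    ring.
  by split => //; split => // _.
Qed.

Unset Implicit Arguments.

Theorem mainTheorem5 (n lam : int) (hn : squarefree n) (hn1 : n != 1)
    (hlam : 3 <= lam) :
  exists s0 : int,
    (forall s : int, s0 <= s -> n < (s - 1) ^+ 2) /\
    (forall s t : int, s0 <= t -> t < s -> ~ (Horbit lam (alpha n s) (alpha n t))) /\
    (forall s : int, s0 <= s -> forall a' b' c' : int,
        Horbit lam (alpha n s) (a', b', c') -> s ^+ 2 - s - n <= `|a'|).
Proof.
have key : forall s : int, `|n| + 5 <= s -> forall a' b' c' : int,
    Horbit lam (alpha n s) (a', b', c') -> s ^+ 2 - s - n <= `|a'|.
  move=> s hs a' b' c' /horbit_red [tg H].
  have [g1 g2 g3 g4 g5] := sb hs.
  have ha0 : 1 <= s ^+ 2 - s - n by lia.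
  have hn9 : 9 * `|n| <= 5 * (s ^+ 2 - s - n) ^+ 2 by apply: L9 => //; lia.
  have I0 : Inv n (s ^+ 2 - s - n) (alpha n s) 0.
    rewrite /Inv /inA /alpha /=; split; first ring.
    split; first lia.
    rewrite g4 g5; split => _; split; lia.
  by case: (red_inv hlam ha0 hn9 I0 H) => _ [].
exists (`|n| + 5); split; [|split].
- by move=> s hs; have [] := sb hs.
- move=> s t ht hts Ho.
  have := key s ltac:(lia) _ _ _ Ho.
  have [g1 g2 _ _ _] := sb ht.
  have := @L5 s t ltac:(lia) hts.
  lia.
- exact: key.
Qed.
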